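(* Let $\lambda=(\lambda_1,\lambda_2)\in\mathbb{C}^2$ with $\sigma:=\lambda_1-\lambda_2\notin\mathbb{N}$, and let $\mu\in\mathbb{C}$. Let $M_\lambda$ be the Verma $gl(2)$-module with highest weight vector $v_\lambda$, and let $\widetilde M$ be the $gl(2)$-module of formal series described in the context. Put $$u_\lambda=\sum_{i=0}^{\infty}\frac{(-1)^i\langle\mu\rangle_i}{i!\,\langle\sigma\rangle_i}\,E_{2,1}^i v_\lambda\; x_1^{i+\mu}x_2^{-i+\mu}\in\widetilde M .$$ Then $u_\lambda$ is annihilated by $E_{1,2}$ and has weight $\lambda$, so there is a unique $gl(2)$-module homomorphism $\Phi:M_\lambda\to\widetilde M$ with $\Phi(v_\lambda)=u_\lambda$, and its Etingof trace function is $$E(z_1,z_2)=\frac{z_1^{\lambda_1+1}z_2^{\lambda_2}}{z_1-z_2}\;{}_2F_1\!\left(\mu+1,-\mu;\lambda_2-\lambda_1;\frac{z_2}{z_2-z_1}\right),$$ where the right-hand side is expanded as $z_1^{\lambda_1}z_2^{\lambda_2}$ times a power series in $z_2/z_1$ (i.e. in the region $|z_2|<|z_1|$).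
   Context: $gl(2)$ has basis $E_{i,j}$ (matrix units), $i,j\in\{1,2\}$. For $c\in\mathbb{C}$, $i\in\mathbb{N}$: $(c)_i=c(c+1)\cdots(c+i-1)$ and $\langle c\rangle_i=c(c-1)\cdots(c-i+1)$, with $(c)_0=\langle c\rangle_0=1$. ${}_2F_1(a,b;c;z)=\sum_{m\ge0}\frac{(a)_m(b)_m}{m!(c)_m}z^m$ for $-c\notin\mathbb{N}$. The Verma module $M_\lambda$ has basis $E_{2,1}^iv_\lambda$ ($i\in\mathbb{N}$) with $E_{1,2}v_\lambda=0$, $E_{k,k}v_\lambda=\lambda_kv_\lambda$. $\widetilde M$ is the space of formal series $\sum_{i_1,i_2\in\mathbb{Z}}v_{i_1,i_2}x_1^{i_1+\mu}x_2^{i_2+\mu}$ with $v_{i_1,i_2}\in M_\lambda$ arbitrary, on which $E_{j_1,j_2}$ acts by $E_{j_1,j_2}(v\,x^{m})=E_{j_1,j_2}(v)\,x^m+v\,(x_{j_1}\partial_{x_{j_2}}-\mu\delta_{j_1,j_2})(x^m)$. Writing $\Phi(w)=(x_1x_2)^{\mu}\sum_{\vec k\in\mathbb{Z}^2}\Phi_{\vec k}(w)x_1^{k_1}x_2^{k_2}$ with $\Phi_{\vec k}\in\mathrm{End}(M_\lambda)$, the Etingof trace function is $E(z_1,z_2)=(x_1x_2)^{-\mu}\mathrm{tr}_{M_\lambda}\Phi z_1^{E_{1,1}}z_2^{E_{2,2}}:=\sum_{\nu}\mathrm{tr}(\Phi_{\vec 0}|_{M_\lambda[\nu]})\,z_1^{\nu_1}z_2^{\nu_2}$,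 the sum over weights $\nu$ of $M_\lambda$, where $M_\lambda[\nu]$ is the (finite-dimensional) weight space on which $E_{k,k}$ acts by $\nu_k$. *)

(* Defs.v *)
(* Complex numbers: C := R[i] for a real closed field R
   (mathcomp-real-closed's complex); taking R := the real numbers gives C = ℂ. *)
From HB Require Import structures.
From mathcomp Require Import all_boot all_order all_algebra.
From mathcomp Require Import complex.
Set Implicit Arguments. Unset Strict Implicit. Unset Printing Implicit Defensive.
Import Order.TTheory GRing.Theory Num.Theory.
Local Open Scope ring_scope.
Local Open Scope complex_scope.

Section Gl2.
Variable R : rcfType.
Notation C := R[i].

Definition rising (c : C) (n : nat) : C := \prod_(k < n) (c + k%:R).
Definition falling (c : C) (n : nat) : C := \prod_(k < n) (c - k%:R).

(* We represent the element
   sum_i a_i E21^i v_lambda by the polynomial sum_i a_i 'X^i, so 1 = v_lambda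
   and 'X^i = E21^i v_lambda.  The gl(2) action on this basis is the standard
   one: E21 e_i = e_{i+1}, E11 e_i = (l1 - i) e_i, E22 e_i = (l2 + i) e_i,
   E12 e_i = i (l1 - l2 - i + 1) e_{i-1}.                                    *)
Variables (l1 l2 mu : C).
Definition sigma : C := l1 - l2.

Definition vE11 (p : {poly C}) : {poly C} := \poly_(i < size p) ((l1 - i%:R) * p`_i).
Definition vE22 (p : {poly C}) : {poly C} := \poly_(i < size p) ((l2 + i%:R) * p`_i).
Definition vE21 (p : {poly C}) : {poly C} := 'X * p.
Definition vE12 (p : {poly C}) : {poly C} :=
  \poly_(i < size p) ((i.+1)%:R * (sigma - i%:R) * p`_i.+1).

(* ---------- the module M~ of formal series ----------
   f : int -> int -> {poly C} represents sum_{k1,k2} f k1 k2 x1^(k1+mu) x2^(k2+mu)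
   (arbitrary coefficients in M_lambda).  E_{j1,j2}(v x^m)
   = E_{j1,j2}(v) x^m + v (x_{j1} d/dx_{j2} - mu delta_{j1 j2}) x^m.          *)
Definition Mt := int -> int -> {poly C}.

Definition tE11 (f : Mt) : Mt := fun k1 k2 => vE11 (f k1 k2) + k1%:~R *: f k1 k2.
Definition tE22 (f : Mt) : Mt := fun k1 k2 => vE22 (f k1 k2) + k2%:~R *: f k1 k2.
(* x1 d/dx2 : x1^(a+mu) x2^(b+mu) |-> (b+mu) x1^(a+1+mu) x2^(b-1+mu) *)
Definition tE12 (f : Mt) : Mt := fun k1 k2 =>
  vE12 (f k1 k2) + ((k2 + 1)%:~R + mu) *: f (k1 - 1)%R (k2 + 1)%R.
(* x2 d/dx1 : x1^(a+mu) x2^(b+mu) |-> (a+mu) x1^(a-1+mu) x2^(b+1+mu) *)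
Definition tE21 (f : Mt) : Mt := fun k1 k2 =>
  vE21 (f k1 k2) + ((k1 + 1)%:~R + mu) *: f (k1 + 1)%R (k2 - 1)%R.

Definition Mt_zero : Mt := fun _ _ => 0.
Definition Mt_scale (a : C) (f : Mt) : Mt := fun k1 k2 => a *: f k1 k2.

Definition u_coef (n : nat) : C :=
  (-1) ^+ n * falling mu n / (n`!%:R * falling sigma n).
Definition u_lam : Mt := fun k1 k2 =>
  match k1 with
  | Posz n => if k2 == - (n%:Z) then u_coef n *: 'X^n else 0
  | Negz _ => 0
  end.

Definition is_gl2_hom (Phi : {poly C} -> Mt) : Prop :=
  [/\ (forall (a : C) (p q : {poly C}) k1 k2,
         Phi (a *: p + q) k1 k2 = a *: Phi p k1 k2 + Phi q k1 k2),
      (forall p, Phi (vE11 p) = tE11 (Phi p)),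
      (forall p, Phi (vE22 p) = tE22 (Phi p)),
      (forall p, Phi (vE12 p) = tE12 (Phi p)) &
      (forall p, Phi (vE21 p) = tE21 (Phi p))].

(* Phi(w) = (x1 x2)^mu sum_k Phi_k(w) x^k, so Phi_k(w) = Phi w k1 k2. *)
Definition Phi_k (Phi : {poly C} -> Mt) (k1 k2 : int) (w : {poly C}) : {poly C} :=
  Phi w k1 k2.

(* The weight space M_lambda[(l1 - n, l2 + n)] is spanned by the weight basis
   vector E21^n v = 'X^n (and these weights are pairwise distinct), so the
   coefficient of z1^(l1-n) z2^(l2+n) in the Etingof trace function
   E(z1,z2) = sum_nu tr(Phi_0 |_{M_lambda[nu]}) z^nu is the diagonal entry of
   Phi_0 at 'X^n; there are no other weights. *)
Definition etingof_coef (Phi : {poly C} -> Mt) (n : nat) : C :=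
  (Phi_k Phi 0 0 ('X^n))`_n.

(* ---------- right-hand side ----------
   With t = z2/z1 :  z1^(l1+1) z2^(l2) / (z1 - z2) = z1^l1 z2^l2 * 1/(1-t),
   z2/(z2 - z1) = -t/(1-t).  The coefficient of t^n of the formal power series
   1/(1-t) * 2F1(a,b;c; -t/(1-t)) is computed exactly by truncating
   1/(1-t) to geom n = 1 + t + ... + t^n and the hypergeometric sum to m <= n. *)
Definition hyp_term (a b c : C) (m : nat) : C :=
  rising a m * rising b m / (m`!%:R * rising c m).
Definition geom (n : nat) : {poly C} := \sum_(k < n.+1) 'X^k.
Definition rhs_coef (n : nat) : C :=
  (geom n * \sum_(m < n.+1)
      hyp_term (mu + 1) (- mu) (l2 - l1) m *: ((- 'X) * geom n) ^+ m)`_n.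

End Gl2.

(* Main.v *)
Require Import Defs.
From HB Require Import structures.
From mathcomp Require Import all_boot all_order all_algebra.
From mathcomp Require Import complex.
From mathcomp Require Import ring zify.
From Stdlib Require Import FunctionalExtensionality.
Import Order.TTheory GRing.Theory Num.Theory.
Local Open Scope ring_scope.
Local Open Scope complex_scope.

Section Aux.
Variable R : rcfType.
Notation C := R[i].
Variables (l1 l2 mu : C).

Lemma coef_vE11 (p : {poly C}) k : (vE11 l1 p)`_k = (l1 - k%:R) * p`_k.
Proof. rewrite /vE11 coef_poly; case: ltnP => // H; by rewrite nth_default // mulr0. Qed.
Lemma coef_vE22 (p : {poly C}) k : (vE22 l2 p)`_k = (l2 + k%:R) * p`_k.
Proof. rewrite /vE22 coef_poly; case: ltnP => // H; by rewrite nth_default // mulr0. Qed.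
Lemma coef_vE12 (p : {poly C}) k :
  (vE12 l1 l2 p)`_k = (k.+1)%:R * (sigma l1 l2 - k%:R) * p`_k.+1.
Proof. rewrite /vE12 coef_poly; case: ltnP => // H; rewrite nth_default ?mulr0 //; exact: leqW. Qed.

Lemma Mt_ext (f g : Mt R) : (forall k1 k2, f k1 k2 = g k1 k2) -> f = g.
Proof. move=> H; apply: functional_extensionality => k1; apply: functional_extensionality => k2; exact: H. Qed.



Lemma tE11_21 f : tE11 l1 (tE21 mu f) = fun k1 k2 => tE21 mu (tE11 l1 f) k1 k2 - tE21 mu f k1 k2.
Proof.
apply: Mt_ext => k1 k2; rewrite /tE11 /tE21 /vE21 /=; apply/polyP => i.
do 4 rewrite ?(coefD, coefB, coefN, coefZ, coef_vE11, coefXM, intrD).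
case: i => [|i] /=; rewrite ?mulr0 ?addr0 ?add0r; ring.
Qed.

Lemma tE22_21 f : tE22 l2 (tE21 mu f) = fun k1 k2 => tE21 mu (tE22 l2 f) k1 k2 + tE21 mu f k1 k2.
Proof.
apply: Mt_ext => k1 k2; rewrite /tE22 /tE21 /vE21 /=; apply/polyP => i.
do 4 rewrite ?(coefD, coefB, coefN, coefZ, coef_vE22, coefXM, intrD, intrB).
case: i => [|i] /=; rewrite ?mulr0 ?addr0 ?add0r; ring.
Qed.

Lemma tE12_21 f : tE12 l1 l2 mu (tE21 mu f) =
  fun k1 k2 => tE21 mu (tE12 l1 l2 mu f) k1 k2 + tE11 l1 f k1 k2 - tE22 l2 f k1 k2.
Proof.
apply: Mt_ext => k1 k2; rewrite /tE12 /tE11 /tE22 /tE21 /vE21 /=; apply/polyP => i.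
rewrite !subrK !addrK.
do 4 rewrite ?(coefD, coefB, coefN, coefZ, coef_vE11, coef_vE22, coef_vE12, coefXM, intrD, intrB).
rewrite /sigma; case: i => [|i] /=; rewrite ?mulr0 ?addr0 ?add0r; ring.
Qed.

Lemma tE21_scale a f : tE21 mu (Mt_scale a f) = Mt_scale a (tE21 mu f).
Proof.
apply: Mt_ext => k1 k2; rewrite /tE21 /Mt_scale /vE21 /=.
apply/polyP => i; do 3 rewrite ?(coefD, coefZ, coefXM).
case: i => [|i] /=; rewrite ?mulr0 ?addr0 ?add0r; ring.
Qed.

Notation u := (u_lam l1 l2 mu).

Lemma u_neg k1 k2 : (k1 < 0)%R -> u k1 k2 = 0.
Proof. by case: k1. Qed.

Lemma u_pos (n : nat) : u n (- n%:Z) = u_coef l1 l2 mu n *: 'X^n.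
Proof. by rewrite /u_lam eqxx. Qed.

Lemma u_off (n : nat) k2 : k2 != - n%:Z -> u n k2 = 0.
Proof. by rewrite /u_lam => /negbTE ->. Qed.

Lemma nat_neq0 n : (n.+1%:R : C) != 0.
Proof. by rewrite pnatr_eq0. Qed.
Lemma fact_neq0 n : (n`!%:R : C) != 0.
Proof. by rewrite pnatr_eq0 -lt0n fact_gt0. Qed.

Hypothesis hsigma : forall n : nat, sigma l1 l2 != n%:R.

Lemma fall_neq0 n : falling (sigma l1 l2) n != 0.
Proof. apply/prodf_neq0 => i _; rewrite subr_eq0; exact: hsigma. Qed.

Lemma u_coefS n : u_coef l1 l2 mu n.+1 * (n.+1%:R * (sigma l1 l2 - n%:R)) =
   (n%:R - mu) * u_coef l1 l2 mu n.
Proof.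
have h1 := nat_neq0 n; have h2 := fact_neq0 n; have h3 := fall_neq0 n.
have h4 : sigma l1 l2 - n%:R != 0 by rewrite subr_eq0; exact: hsigma.
rewrite /u_coef /falling !big_ord_recr /= factS natrM exprS.
rewrite -/(falling mu n) -/(falling (sigma l1 l2) n) in h3 *.
field.
by rewrite h2 h3 h4 addrC natr1 h1.
Qed.

Lemma u12 : tE12 l1 l2 mu u = Mt_zero R.
Proof.
apply: Mt_ext => k1 k2; rewrite /tE12 /Mt_zero.
case: k1 => [n|n]; last first.
  rewrite u_neg // (u_neg (Negz n - 1)%R (k2+1)%R); last by lia.
  by rewrite scaler0 addr0; apply/polyP => i; rewrite coef_vE12 !coef0 mulr0.
case: n => [|n].
  rewrite (u_neg (0%:Z - 1)%R (k2+1)%R) // scaler0 addr0.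
  apply/polyP => j; rewrite coef_vE12 coef0.
  case: (eqVneq k2 (- 0%:Z)) => [->|ne]; last by rewrite u_off // coef0 mulr0.
  by rewrite u_pos coefZ coefXn /= mulr0 mulr0.
have -> : (Posz n.+1 - 1 = Posz n)%R by lia.
case: (eqVneq k2 (- n.+1%:Z)) => [->|ne]; last first.
  rewrite !u_off ?scaler0 ?addr0; last by apply/eqP; move/eqP: ne; lia.
    by apply/polyP => i; rewrite coef_vE12 !coef0 mulr0.
  by apply/eqP; move/eqP: ne; lia.
set t := (X in u n X); have -> : t = (- n%:Z)%R by rewrite /t; lia.
rewrite !u_pos; apply/polyP => j.
rewrite coefD coef_vE12 !coefZ !coefXn coef0 eqSS.
case: eqP => [->|_]; last by rewrite !mulr0 addr0.
rewrite /= !mulr1 mulrC u_coefS intrD intrN -!pmulrn.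
ring.
Qed.

Lemma u11 : tE11 l1 u = Mt_scale l1 u.
Proof.
apply: Mt_ext => k1 k2; rewrite /tE11 /Mt_scale; apply/polyP => j.
rewrite coefD coef_vE11 !coefZ.
case: k1 => [n|n]; last by rewrite u_neg // coef0 !mulr0 addr0.
case: (eqVneq k2 (- n%:Z)) => [->|ne]; last by rewrite u_off // coef0 !mulr0 addr0.
rewrite u_pos coefZ coefXn.
case: eqP => [->|_]; last by rewrite !mulr0 addr0.
have -> : (n%:Z)%:~R = n%:R :> C by [].
ring.
Qed.

Lemma u22 : tE22 l2 u = Mt_scale l2 u.
Proof.
apply: Mt_ext => k1 k2; rewrite /tE22 /Mt_scale; apply/polyP => j.
rewrite coefD coef_vE22 !coefZ.
case: k1 => [n|n]; last by rewrite u_neg // coef0 !mulr0 addr0.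
case: (eqVneq k2 (- n%:Z)) => [->|ne]; last by rewrite u_off // coef0 !mulr0 addr0.
rewrite u_pos coefZ coefXn intrN.
case: eqP => [->|_]; last by rewrite !mulr0 addr0.
have -> : (n%:Z)%:~R = n%:R :> C by [].
ring.
Qed.

Definition W i := iter i (tE21 mu) u.
Arguments W : simpl never.

Lemma W11 i : tE11 l1 (W i) = Mt_scale (l1 - i%:R) (W i).
Proof.
elim: i => [|i IH]; first by rewrite /W /= u11 subr0.
rewrite /W iterS -/(W i) tE11_21 IH tE21_scale.
apply: Mt_ext => k1 k2; rewrite /Mt_scale -{2}[tE21 _ _ _ _]scale1r -scalerBl; congr (_ *: _).
rewrite -natr1; ring.
Qed.

Lemma W22 i : tE22 l2 (W i) = Mt_scale (l2 + i%:R) (W i).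
Proof.
elim: i => [|i IH]; first by rewrite /W /= u22 addr0.
rewrite /W iterS -/(W i) tE22_21 IH tE21_scale.
apply: Mt_ext => k1 k2; rewrite /Mt_scale -{2}[tE21 _ _ _ _]scale1r -scalerDl; congr (_ *: _).
rewrite -natr1; ring.
Qed.

Lemma W12 i : tE12 l1 l2 mu (W i.+1) = Mt_scale (i.+1%:R * (sigma l1 l2 - i%:R)) (W i).
Proof.
elim: i => [|i IH].
  rewrite /W /= tE12_21 u12 u11 u22.
  apply: Mt_ext => k1 k2; rewrite /Mt_scale /tE21 /Mt_zero /vE21 mulr0 scaler0 addr0 add0r.
  by rewrite -scalerBl /sigma mul1r subr0.
rewrite /W iterS -/(W i.+1) tE12_21 IH tE21_scale W11 W22.
apply: Mt_ext => k1 k2; rewrite /Mt_scale -/(W i.+1) -scalerDl -scalerBl; congr (_ *: _).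
rewrite /sigma -!natr1; ring.
Qed.

Lemma lin_sum (L : {poly C} -> {poly C})
  (HL : forall a p q, L (a *: p + q) = a *: L p + L q) N (a : 'I_N -> C) (P : 'I_N -> {poly C}) :
  L (\sum_(i < N) a i *: P i) = \sum_(i < N) a i *: L (P i).
Proof.
have L0 : L 0 = 0.
  have := HL 1 0 0; rewrite !scale1r [X in L X]addr0 => H.
  by apply: (addrI (L 0)); rewrite addr0 -H.
elim: N a P => [|N IH] a P; first by rewrite !big_ord0.
rewrite !big_ord_recr /= addrC HL IH addrC //.
Qed.

Lemma vE11_lin a p q : vE11 l1 (a *: p + q) = a *: vE11 l1 p + vE11 l1 q.
Proof. apply/polyP => i; rewrite !(coefD, coefZ, coef_vE11); ring. Qed.
Lemma vE22_lin a p q : vE22 l2 (a *: p + q) = a *: vE22 l2 p + vE22 l2 q.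
Proof. apply/polyP => i; rewrite !(coefD, coefZ, coef_vE22); ring. Qed.
Lemma vE12_lin a p q : vE12 l1 l2 (a *: p + q) = a *: vE12 l1 l2 p + vE12 l1 l2 q.
Proof. apply/polyP => i; rewrite !(coefD, coefZ, coef_vE12); ring. Qed.
Lemma vE21_lin a (p q : {poly C}) : vE21 (a *: p + q) = a *: vE21 p + vE21 q.
Proof. by rewrite /vE21 mulrDr scalerAr. Qed.

Lemma shape_sum (L : {poly C} -> {poly C})
  (HL : forall a p q, L (a *: p + q) = a *: L p + L q) (c : C) N (a : 'I_N -> C) (P Q : 'I_N -> {poly C}) :
  L (\sum_(i < N) a i *: P i) + c *: \sum_(i < N) a i *: Q i =
  \sum_(i < N) a i *: (L (P i) + c *: Q i).
Proof.
rewrite lin_sum // scaler_sumr -big_split; apply: eq_bigr => i _.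
by rewrite scalerDr !scalerA mulrC.
Qed.

Definition PhiN N (p : {poly C}) : Mt R := fun k1 k2 => \sum_(i < N) p`_i *: W i k1 k2.

Lemma tE11_sum N (a : 'I_N -> C) F :
  tE11 l1 (fun k1 k2 => \sum_(i < N) a i *: F i k1 k2) = fun k1 k2 => \sum_(i<N) a i *: tE11 l1 (F i) k1 k2.
Proof. apply: Mt_ext => k1 k2; rewrite /tE11 /=; exact: shape_sum vE11_lin _ _ _ _ _. Qed.
Lemma tE22_sum N (a : 'I_N -> C) F :
  tE22 l2 (fun k1 k2 => \sum_(i < N) a i *: F i k1 k2) = fun k1 k2 => \sum_(i<N) a i *: tE22 l2 (F i) k1 k2.
Proof. apply: Mt_ext => k1 k2; rewrite /tE22 /=; exact: shape_sum vE22_lin _ _ _ _ _. Qed.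
Lemma tE12_sum N (a : 'I_N -> C) F :
  tE12 l1 l2 mu (fun k1 k2 => \sum_(i < N) a i *: F i k1 k2) = fun k1 k2 => \sum_(i<N) a i *: tE12 l1 l2 mu (F i) k1 k2.
Proof. apply: Mt_ext => k1 k2; rewrite /tE12 /=; exact: shape_sum vE12_lin _ _ _ _ _. Qed.
Lemma tE21_sum N (a : 'I_N -> C) F :
  tE21 mu (fun k1 k2 => \sum_(i < N) a i *: F i k1 k2) = fun k1 k2 => \sum_(i<N) a i *: tE21 mu (F i) k1 k2.
Proof. apply: Mt_ext => k1 k2; rewrite /tE21 /=; exact: shape_sum vE21_lin _ _ _ _ _. Qed.

Definition myPhi (p : {poly C}) : Mt R := PhiN (size p) p.

Lemma PhiN_widen N (p : {poly C}) : (size p <= N)%N -> PhiN N p = myPhi p.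
Proof.
move=> H; apply: Mt_ext => k1 k2; rewrite /myPhi /PhiN.
rewrite (big_ord_widen N (fun i => p`_i *: W i k1 k2) H) [RHS]big_mkcond /=.
apply: eq_bigr => i _; case: ifP => // /negbT; rewrite -leqNgt => Hi.
by rewrite nth_default // scale0r.
Qed.

Lemma myPhi_lin a p q k1 k2 : myPhi (a *: p + q) k1 k2 = a *: myPhi p k1 k2 + myPhi q k1 k2.
Proof.
set N := (size (a *: p + q)%R + size p + size q)%N.
rewrite -(PhiN_widen N (a *: p + q)); last by rewrite /N; lia.
rewrite -(PhiN_widen N (p)); last by rewrite /N; lia.
rewrite -(PhiN_widen N (q)); last by rewrite /N; lia.
rewrite /PhiN scaler_sumr -big_split; apply: eq_bigr => i _.
by rewrite coefD coefZ scalerDl scalerA.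
Qed.

Lemma myPhi11 p : myPhi (vE11 l1 p) = tE11 l1 (myPhi p).
Proof.
rewrite -(PhiN_widen (size p) (vE11 l1 p)); last exact: size_poly.
rewrite /myPhi /PhiN tE11_sum; apply: Mt_ext => k1 k2; apply: eq_bigr => i _.
by rewrite coef_vE11 W11 /Mt_scale scalerA mulrC.
Qed.

Lemma myPhi22 p : myPhi (vE22 l2 p) = tE22 l2 (myPhi p).
Proof.
rewrite -(PhiN_widen (size p) (vE22 l2 p)); last exact: size_poly.
rewrite /myPhi /PhiN tE22_sum; apply: Mt_ext => k1 k2; apply: eq_bigr => i _.
by rewrite coef_vE22 W22 /Mt_scale scalerA mulrC.
Qed.

Lemma myPhi21 p : myPhi (vE21 p) = tE21 mu (myPhi p).
Proof.
have Hs : (size (vE21 p) <= (size p).+1)%N.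
  rewrite /vE21; apply: leq_trans (size_polyMleq _ _) _; rewrite size_polyX; lia.
rewrite -(PhiN_widen _ _ Hs) -(PhiN_widen (size p).+1 p) //.
rewrite /PhiN tE21_sum; apply: Mt_ext => k1 k2.
rewrite big_ord_recl big_ord_recr /= /vE21 coefXM eqxx scale0r add0r.
rewrite (nth_default _ (leqnn _)) scale0r addr0.
apply: eq_bigr => i _; rewrite coefXM /=; done.
Qed.

Lemma myPhi12 p : myPhi (vE12 l1 l2 p) = tE12 l1 l2 mu (myPhi p).
Proof.
have Hs : (size (vE12 l1 l2 p) <= (size p).+1)%N.
  apply: leq_trans (size_poly _ _) _; exact: leqnSn.
rewrite -(PhiN_widen _ _ Hs) -(PhiN_widen (size p).+1 p) //.
rewrite /PhiN tE12_sum; apply: Mt_ext => k1 k2.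
rewrite [LHS]big_ord_recr [RHS]big_ord_recl /= coef_vE12.
rewrite (nth_default _ (leqnSn _)) mulr0 scale0r addr0.
have -> : tE12 l1 l2 mu (W 0) = Mt_zero R by exact: u12.
rewrite /Mt_zero scaler0 add0r.
apply: eq_bigr => i _; rewrite coef_vE12 W12 /Mt_scale scalerA; congr (_ *: _).
by rewrite /bump /= mulrC.
Qed.

Lemma myPhi_hom : is_gl2_hom l1 l2 mu myPhi.
Proof. split; [exact: myPhi_lin|exact: myPhi11|exact: myPhi22|exact: myPhi12|exact: myPhi21]. Qed.

Lemma myPhi1 : myPhi 1 = u.
Proof.
apply: Mt_ext => k1 k2; rewrite /myPhi /PhiN size_poly1 big_ord1 /= coef1 /= scale1r //.
Qed.

Lemma hom_Xn Phi : is_gl2_hom l1 l2 mu Phi -> Phi 1 = u -> forall n, Phi 'X^n = W n.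
Proof.
case=> _ _ _ _ H21 H1; elim=> [|n IH]; first by rewrite expr0 H1.
by rewrite exprS -[_ * _]/(vE21 _) H21 IH /W iterS.
Qed.

Lemma hom_unique Phi : is_gl2_hom l1 l2 mu Phi -> Phi 1 = u -> forall w, Phi w = myPhi w.
Proof.
move=> Hh H1 w; have HX := hom_Xn _ Hh H1; case: Hh => Hl _ _ _ _.
apply: Mt_ext => k1 k2.
rewrite -{1}(coefK w) poly_def (lin_sum (fun p => Phi p k1 k2)); last by move=> *; exact: Hl.
by rewrite /myPhi /PhiN; apply: eq_bigr => i _; rewrite HX.
Qed.

Definition g n (a : nat) := (W n a (- (a%:Z)))`_(n + a).

Lemma g0 a : g 0 a = u_coef l1 l2 mu a.
Proof. by rewrite /g /W /= eqxx coefZ coefXn eqxx mulr1. Qed.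

Lemma gS n a : g n.+1 a = g n a + (mu + 1 + a%:R) * g n a.+1.
Proof.
rewrite /g {1}/W iterS -/(W n) {1}/tE21 /vE21 coefD coefZ coefXM /=.
have -> : (a%:Z + 1 = a.+1%:Z)%R by lia.
have -> : (- a%:Z - 1 = - a.+1%:Z)%R by lia.
rewrite addSnnS -pmulrn -natr1; congr (_ + _ * _); ring.
Qed.

Definition P a j := \prod_(t < j) (mu + 1 + (a + t)%:R).

Lemma PS a j : P a j.+1 = (mu + 1 + a%:R) * P a.+1 j.
Proof.
rewrite /P big_ord_recl addn0; congr (_ * _); apply: eq_bigr => i _.
by rewrite /bump /= addnS addSn.
Qed.

Lemma binom_step n (T : nat -> C) :
  \sum_(j < n.+1) 'C(n, j)%:R * T j + \sum_(j < n.+1) 'C(n, j)%:R * T j.+1 =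
  \sum_(j < n.+2) 'C(n.+1, j)%:R * T j.
Proof.
rewrite [RHS]big_ord_recl [X in X + _ = _]big_ord_recl [X in _ + X = _]big_ord_recr /=.
rewrite [X in _ = _ + X]big_ord_recr /= !binn.
have -> : \sum_(i < n) 'C(n.+1, bump 0 i)%:R * T (bump 0 i) =
   \sum_(i < n) 'C(n, bump 0 i)%:R * T (bump 0 i) + \sum_(i < n) 'C(n, i)%:R * T i.+1.
  rewrite -big_split; apply: eq_bigr => i _.
  by rewrite /bump /= binS natrD mulrDl.
rewrite !bin0 (_ : bump 0 n = n.+1) //; ring.
Qed.

Lemma g_closed n a : g n a = \sum_(j < n.+1) 'C(n, j)%:R * (P a j * u_coef l1 l2 mu (a + j)).
Proof.
elim: n a => [|n IH] a.
  by rewrite big_ord1 g0 bin0 mul1r /P big_ord0 mul1r addn0.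
rewrite gS !IH mulr_sumr.
apply: etrans _ (binom_step n (fun j => P a j * u_coef l1 l2 mu (a + j))); congr (_ + _).
apply: eq_bigr => j _ /=; rewrite PS addSnnS; ring.
Qed.

Lemma coef_geom n j : (geom R n)`_j = (j <= n)%:R.
Proof.
have -> : geom R n = \poly_(i < n.+1) 1.
  by rewrite poly_def /geom; apply: eq_bigr => i _; rewrite scale1r.
by rewrite coef_poly ltnS; case: (j <= n)%N.
Qed.

Lemma hockey d k : (\sum_(j < d.+1) 'C(j + k, k))%N = 'C(d + k.+1, k.+1).
Proof.
elim: d => [|d IH]; first by rewrite big_ord1 add0n !binn.
rewrite big_ord_recr /= IH.
have -> : (d.+1 + k.+1 = (d + k.+1).+1)%N by lia.
by rewrite binS addSnnS addnC.
Qed.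

Lemma geom_pow n k d : (d <= n)%N -> (geom R n ^+ k.+1)`_d = 'C(d + k, k)%:R.
Proof.
elim: k d => [|k IH] d Hd; first by rewrite expr1 coef_geom Hd addn0 bin0.
rewrite exprS coefMr.
have -> : \sum_(j < d.+1) (geom R n)`_(d - j) * (geom R n ^+ k.+1)`_j =
   \sum_(j < d.+1) ('C(j + k, k))%:R.
  apply: eq_bigr => j _; rewrite coef_geom IH; last by have := ltn_ord j; lia.
  by rewrite (_ : (d - j <= n)%N) ?mul1r //; lia.
by rewrite -natr_sum hockey addnS.
Qed.

Lemma rhs_sum n : rhs_coef l1 l2 mu n =
  \sum_(m < n.+1) hyp_term (mu + 1) (- mu) (l2 - l1) m * ((-1) ^+ m * 'C(n, m)%:R).
Proof.
rewrite /rhs_coef mulr_sumr coef_sum; apply: eq_bigr => m _.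
rewrite -scalerAr coefZ; congr (_ * _).
have -> : geom R n * (- 'X * geom R n) ^+ m = ((-1) ^+ m)%:P * ('X^m * geom R n ^+ m.+1).
  by rewrite rmorph_sign exprMn (exprNn (polyX _)) exprS; ring.
rewrite coefCM coefXnM ltnNge (_ : (m <= n)%N) /=; last by have := ltn_ord m; lia.
rewrite geom_pow ?leq_subr // subnK //; by have := ltn_ord m; lia.
Qed.

Lemma rising_opp (x : C) m : rising (- x) m = (-1) ^+ m * falling x m.
Proof.
elim: m => [|m IH]; first by rewrite /rising /falling !big_ord0 expr0 mulr1.
rewrite /rising /falling !big_ord_recr /= -/(rising (- x) m) -/(falling x m) IH exprS; ring.
Qed.

Lemma trace_eq Phi : is_gl2_hom l1 l2 mu Phi -> Phi 1 = u ->
  forall n, etingof_coef Phi n = rhs_coef l1 l2 mu n.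
Proof.
move=> Hh H1 n.
rewrite /etingof_coef /Phi_k (hom_Xn _ Hh H1) rhs_sum.
have -> : (W n 0 0)`_n = g n 0 by rewrite /g addn0.
rewrite g_closed; apply: eq_bigr => m _.
have -> : P 0 m = rising (mu + 1) m by [].
rewrite /hyp_term (_ : l2 - l1 = - sigma l1 l2); last by rewrite /sigma opprB.
rewrite !rising_opp /u_coef.
set s := (-1) ^+ m.
have ss : s * s = 1 by rewrite /s -expr2 sqrr_sign.
have si : s^-1 = s by rewrite /s invr_sign.
rewrite !invfM si.
rewrite [RHS](_ : _ = ('C(n, m)%:R * (rising (mu + 1) m * (s * falling mu m * ((m`!%:R)^-1 * (falling (sigma l1 l2) m)^-1)))) * (s * s)).
  by rewrite ss mulr1.
ring.
Qed.
End Aux.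

Theorem theorem2p1 (R : rcfType) (l1 l2 mu : R[i])
  (hsigma : forall n : nat, sigma l1 l2 != n%:R) :
  [/\ tE12 l1 l2 mu (u_lam l1 l2 mu) = Mt_zero R
      /\ tE11 l1 (u_lam l1 l2 mu) = Mt_scale l1 (u_lam l1 l2 mu)
      /\ tE22 l2 (u_lam l1 l2 mu) = Mt_scale l2 (u_lam l1 l2 mu),
      (exists Phi, is_gl2_hom l1 l2 mu Phi /\ Phi 1 = u_lam l1 l2 mu),
      (forall Phi Psi, is_gl2_hom l1 l2 mu Phi -> Phi 1 = u_lam l1 l2 mu ->
          is_gl2_hom l1 l2 mu Psi -> Psi 1 = u_lam l1 l2 mu ->
          forall w, Phi w = Psi w) &
      (forall Phi, is_gl2_hom l1 l2 mu Phi -> Phi 1 = u_lam l1 l2 mu ->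
          forall n : nat, etingof_coef Phi n = rhs_coef l1 l2 mu n)].
Proof.
split.
- split; first exact: u12 hsigma.
  by split; [exact: u11 | exact: u22].
- exists (myPhi R l1 l2 mu); split; [exact: myPhi_hom | exact: myPhi1].
- move=> Phi Psi HP HP1 HQ HQ1 w.
  by rewrite (hom_unique _ _ _ _ _ HP HP1) (hom_unique _ _ _ _ _ HQ HQ1).
- exact: trace_eq.
Qed.
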